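(* An even nonnegative integer $n$ satisfies $v(n)=0$ if and only if $n=2^t-2$ or $n=2^t$ for some positive integer $t$.
   Context: A hyperbinary expansion of a nonnegative integer $n$ is a word $x_0\cdots x_k$ over $\{0,1,2\}$ with $x_0\ne0$ and $\sum_i x_i2^{k-i}=n$. The empty word is the unique hyperbinary expansion of $0$. Write $\mathcal H(n)$ for the set of such expansions and $b(n)=|\mathcal H(n)|$. $A(n)$ is the directed graph on $\mathcal H(n)$ with an arc from $\mathbf x02\mathbf y$ to $\mathbf x10\mathbf y$, from $2\mathbf y$ to $10\mathbf y$, and from $\mathbf x12\mathbf y$ to $\mathbf x20\mathbf y$, for arbitrary words $\mathbf x,\mathbf y$ whenever both endpoints lie in $\mathcal H(n)$. $A(n)$ is connected. $v(n)$ denotes the cyclomatic number of $A(n)$: (number of arcs) $-\,b(n)+1$. *)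

(* Defs.v *)
From mathcomp Require Import all_boot.
From mathcomp Require Import all_algebra.
Set Implicit Arguments. Unset Strict Implicit. Unset Printing Implicit Defensive.

(* Words over {0,1,2} are represented as sequences of naturals, x_0 first. *)

Definition hval (w : seq nat) : nat := foldl (fun a d => a.*2 + d) 0 w.

Definition is_hyp (n : nat) (w : seq nat) : bool :=
  [&& all (fun d => d <= 2) w, (w == [::]) || (head 0 w != 0) & hval w == n].

Fixpoint words (k : nat) : seq (seq nat) :=
  if k is k'.+1 then
    flatten [seq [seq d :: w | w <- words k'] | d <- [:: 0; 1; 2]]
  else [:: [::]].

(* H(n) as an explicit duplicate-free list.  Every expansion of n has length
   at most n (if x_0 <> 0 then 2^k <= n, so k+1 <= n), so searching words of
   length <= n is exhaustive. *)
Definition hyp_list (n : nat) : seq (seq nat) :=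
  [seq w <- flatten [seq words k | k <- iota 0 n.+1] | is_hyp n w].

Definition b (n : nat) : nat := size (hyp_list n).

(* the arc relation of A(n) (endpoints' membership in H(n) checked separately):
   x02y -> x10y,  2y -> 10y,  x12y -> x20y.  Any decomposition u = x ++ _ has
   x = take i u with i = size x, so quantifying over i is exhaustive. *)
Definition arc (u w : seq nat) : bool :=
  has (fun i =>
         let x := take i u in let y := drop i.+2 u in
         ((u == x ++ [:: 0; 2] ++ y) && (w == x ++ [:: 1; 0] ++ y)) ||
         ((u == x ++ [:: 1; 2] ++ y) && (w == x ++ [:: 2; 0] ++ y)))
      (iota 0 (size u).+1)
  || (if u is 2 :: y then w == [:: 1; 0] ++ y else false).

Definition num_arcs (n : nat) : nat :=
  count (fun p : seq nat * seq nat => arc p.1 p.2)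
        [seq (u, w) | u <- hyp_list n, w <- hyp_list n].

Definition v (n : nat) : int := ((num_arcs n)%:Z - (b n)%:Z + 1)%R.

(* Main.v *)
Require Import Defs.
From mathcomp Require Import all_boot all_algebra zify.

Lemma mem_cons_map (d a : nat) (W : seq (seq nat)) (w : seq nat) :
  (a :: w \in [seq d :: x | x <- W]) = (a == d) && (w \in W).
Proof.
apply/mapP/andP => [[x Hx [-> ->]]|[/eqP -> Hw]]; first by [].
by exists w.
Qed.

Lemma mem_words k w : (w \in words k) = (size w == k) && all (fun d => d <= 2) w.
Proof.
elim: k w => [|k IH] [|a w] //=.
  rewrite !mem_cat in_nil orbF; apply/negP => /or3P [] /mapP [] //.
rewrite !mem_cat !mem_cons_map in_nil orbF !IH eqSS.
case: a => [|[|[|a]]] /=; by rewrite ?orbF ?andbF.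
Qed.

Lemma uniq_words k : uniq (words k).
Proof.
elim: k => [|k IH] //=.
rewrite cats0 !cat_uniq !map_inj_uniq ?IH; try by move=> x y [].
rewrite /= andbT; apply/andP; split.
- apply/hasPn => w; rewrite mem_cat => /orP [] /mapP [x _ ->]; by rewrite mem_cons_map.
- apply/hasPn => w /mapP [x _ ->]; by rewrite mem_cons_map.
Qed.
Definition W n := flatten [seq words k | k <- iota 0 n].

Lemma mem_W n w : (w \in W n) = (size w < n) && all (fun d => d <= 2) w.
Proof.
apply/flattenP/andP => [[s /mapP [k]]|[H1 H2]].
  rewrite mem_iota add0n => Hk -> ; rewrite mem_words => /andP [/eqP Hs ->].
  by rewrite Hs; case/andP: Hk.
exists (words (size w)); last by rewrite mem_words eqxx.
by apply/mapP; exists (size w) => //; rewrite mem_iota.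
Qed.

Lemma uniq_W n : uniq (W n).
Proof.
elim: n => [|n IH] //.
rewrite /W -addn1 iotaD map_cat flatten_cat cat_uniq -/(W n) IH /= cats0 uniq_words andbT.
apply/hasPn => w; rewrite mem_words mem_W => /andP [/eqP -> _].
by rewrite ltnn.
Qed.

Lemma hval_ge a0 w : a0 * 2 ^ size w <= foldl (fun a d => a.*2 + d) a0 w.
Proof.
elim: w a0 => [|d w IH] a0 /=; first by rewrite muln1.
apply: leq_trans (IH _). rewrite expnS mulnA leq_mul2r.
by rewrite -muln2 leq_addr orbT.
Qed.

Lemma is_hyp_size n w : is_hyp n w -> size w <= n.
Proof.
case: w => [|d w] //= /and3P [_ Hd /eqP Hv].
rewrite /hval /= add0n in Hv.
have := hval_ge d w; rewrite Hv.
have : size w < 2 ^ size w by apply: ltn_expl.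
case: d Hd {Hv} => // d _ H1 H2.
apply: leq_trans H1 (leq_trans _ H2). by rewrite leq_pmull.
Qed.

Lemma hyp_listE n : hyp_list n = [seq w <- W n.+1 | is_hyp n w].
Proof. by []. Qed.

Lemma mem_hyp n w : (w \in hyp_list n) = is_hyp n w.
Proof.
rewrite hyp_listE mem_filter mem_W.
case H: (is_hyp n w) => //=.
rewrite ltnS is_hyp_size //. by case/and3P: H.
Qed.

Lemma uniq_hyp n : uniq (hyp_list n).
Proof. by rewrite hyp_listE filter_uniq // uniq_W. Qed.

Definition arcR (u w : seq nat) := exists x y,
  [\/ u = x ++ 0::2::y /\ w = x ++ 1::0::y,
      u = x ++ 1::2::y /\ w = x ++ 2::0::y |
      [/\ x = [::], u = 2::y & w = 1::0::y]].

Lemma drop2 (x y : seq nat) a c : drop (size x).+2 (x ++ a::c::y) = y.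
Proof. by elim: x => [|? x IH] /=; rewrite ?drop0. Qed.

Lemma arcP u w : Defs.arc u w <-> arcR u w.
Proof.
split.
- rewrite /Defs.arc => /orP [/hasP [i _ /orP [/andP [/eqP Hu /eqP Hw]|/andP [/eqP Hu /eqP Hw]]] | Hpre].
  + by exists (take i u), (drop i.+2 u); apply: Or31.
  + by exists (take i u), (drop i.+2 u); apply: Or32.
  + case: u Hpre => [|[|[|[|a]]] y] //= /eqP Hw.
    by exists [::], y; apply: Or33.
- case => x [y [[Hu Hw]|[Hu Hw]|[Hx Hu Hw]]]; subst.
  + apply/orP; left; apply/hasP; exists (size x).
      by rewrite mem_iota size_cat /= add0n ltnS leq_addr.
    by rewrite take_size_cat // drop2 /= !eqxx ?orbT.
  + apply/orP; left; apply/hasP; exists (size x).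
      by rewrite mem_iota size_cat /= add0n ltnS leq_addr.
    by rewrite take_size_cat // drop2 /= !eqxx ?orbT.
  + by apply/orP; right.
Qed.

Definition succlast (w : seq nat) := rcons (take (size w).-1 w) (last 0 w).+1.

Lemma succlast_rcons x a : succlast (rcons x a) = rcons x a.+1.
Proof.
rewrite /succlast size_rcons /= last_rcons.
by have -> : take (size x) (rcons x a) = x by rewrite -cats1 take_size_cat.
Qed.

Lemma cat2 (x : seq nat) a c : x ++ [:: a; c] = rcons (rcons x a) c.
Proof. by rewrite -!cats1 -catA. Qed.

Lemma arc_rcons u w d e :
  Defs.arc (rcons u d) (rcons w e) =
  ((d == e) && Defs.arc u w) || [&& d == 2, e == 0, last 0 u <= 1 & w == succlast u].
Proof.
apply/idP/idP.
- move/arcP => [x [y H]].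
  case/lastP: y H => [|y z] H.
  + case: H => [[Hu Hw]|[Hu Hw]|[Hx Hu Hw]].
    * move/eqP: Hu; rewrite cat2 eqseq_rcons => /andP [/eqP -> /eqP ->].
      move/eqP: Hw; rewrite cat2 eqseq_rcons => /andP [/eqP -> /eqP ->].
      by rewrite last_rcons succlast_rcons !eqxx ?orbT.
    * move/eqP: Hu; rewrite cat2 eqseq_rcons => /andP [/eqP -> /eqP ->].
      move/eqP: Hw; rewrite cat2 eqseq_rcons => /andP [/eqP -> /eqP ->].
      by rewrite last_rcons succlast_rcons !eqxx ?orbT.
    * move/eqP: Hu; rewrite -[[:: 2]]/(rcons [::] 2) eqseq_rcons => /andP [/eqP -> /eqP ->].
      move/eqP: Hw; rewrite -[[:: 1; 0]]/(rcons [:: 1] 0) eqseq_rcons => /andP [/eqP -> /eqP ->].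
      by [].
  + case: H => [[Hu Hw]|[Hu Hw]|[Hx Hu Hw]].
    * move/eqP: Hu; rewrite -!rcons_cons -rcons_cat eqseq_rcons => /andP [/eqP -> /eqP ->].
      move/eqP: Hw; rewrite -!rcons_cons -rcons_cat eqseq_rcons => /andP [/eqP -> /eqP ->].
      rewrite eqxx /=; apply/orP; left; apply/arcP; exists x, y; exact: Or31.
    * move/eqP: Hu; rewrite -!rcons_cons -rcons_cat eqseq_rcons => /andP [/eqP -> /eqP ->].
      move/eqP: Hw; rewrite -!rcons_cons -rcons_cat eqseq_rcons => /andP [/eqP -> /eqP ->].
      rewrite eqxx /=; apply/orP; left; apply/arcP; exists x, y; exact: Or32.
    * move/eqP: Hu; rewrite -rcons_cons eqseq_rcons => /andP [/eqP -> /eqP ->].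
      move/eqP: Hw; rewrite -!rcons_cons eqseq_rcons => /andP [/eqP -> /eqP ->].
      rewrite eqxx /=; apply/orP; left; apply/arcP; exists [::], y; exact: Or33.
- case/orP => [/andP [/eqP <- /arcP [x [y H]]] | /and4P [/eqP -> /eqP -> Hl /eqP ->]]; apply/arcP.
  + exists x, (rcons y d).
    case: H => [[-> ->]|[-> ->]|[-> -> ->]].
    * by apply: Or31; rewrite !rcons_cat.
    * by apply: Or32; rewrite !rcons_cat.
    * by apply: Or33.
  + case/lastP: u Hl => [|x a] Hl.
      by exists [::], [::]; apply: Or33.
    rewrite last_rcons in Hl; rewrite succlast_rcons.
    exists x, [::].
    case: a Hl => [|[|a]] // _.
    * by apply: Or31; rewrite !cat2.
    * by apply: Or32; rewrite !cat2.
Qed.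

Lemma is_hyp_rcons N u d :
  is_hyp N (rcons u d) = [&& all (fun d => d <= 2) u, d <= 2,
     (if u is [::] then d != 0 else head 0 u != 0) & (hval u).*2 + d == N].
Proof.
rewrite /is_hyp all_rcons /hval foldl_rcons.
case: u => [|x u] /=; first by rewrite andbT.
by case: (d <= 2) => /=; rewrite ?andbF.
Qed.

Lemma mem_rcons_map (c d : nat) (L : seq (seq nat)) u :
  (rcons u d \in [seq rcons x c | x <- L]) = (d == c) && (u \in L).
Proof.
apply/mapP/andP => [[x Hx /eqP]|[/eqP -> Hu]]; last by exists u.
by rewrite eqseq_rcons => /andP [/eqP -> /eqP ->].
Qed.

Lemma nil_notin_map (c : nat) (L : seq (seq nat)) :
  ([::] \in [seq rcons x c | x <- L]) = false.
Proof. by apply/mapP => [[x _]]; case: x. Qed.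

Lemma eqD1 h m : (h.*2 + 0 == m.*2.+1) = false. Proof. by apply/eqP; lia. Qed.
Lemma eqD2 h m : (h.*2 + 1 == m.*2.+1) = (h == m). Proof. by apply/eqP/eqP; lia. Qed.
Lemma eqD3 h m : (h.*2 + 2 == m.*2.+1) = false. Proof. by apply/eqP; lia. Qed.
Lemma eqD4 h m : (h.*2 + 0 == m.*2.+2) = (h == m.+1). Proof. by apply/eqP/eqP; lia. Qed.
Lemma eqD5 h m : (h.*2 + 1 == m.*2.+2) = false. Proof. by apply/eqP; lia. Qed.
Lemma eqD6 h m : (h.*2 + 2 == m.*2.+2) = (h == m). Proof. by apply/eqP/eqP; lia. Qed.
Definition eqD := (eqD1, eqD2, eqD3, eqD4, eqD5, eqD6).

Lemma hyp_odd m : perm_eq (hyp_list m.*2.+1) [seq rcons x 1 | x <- hyp_list m].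
Proof.
apply: uniq_perm; first exact: uniq_hyp.
  by rewrite map_inj_uniq ?uniq_hyp //; apply: rcons_injl.
case/lastP => [|u d]; first by rewrite mem_hyp nil_notin_map.
rewrite mem_hyp is_hyp_rcons mem_rcons_map mem_hyp /is_hyp.
case: d => [|[|[|d]]]; case: u => [|x u] /=; rewrite ?andbF ?andbT ?eqD //= ?andbF //.
Qed.

Lemma hyp_even m : perm_eq (hyp_list m.*2.+2)
  ([seq rcons x 0 | x <- hyp_list m.+1] ++ [seq rcons x 2 | x <- hyp_list m]).
Proof.
apply: uniq_perm; first exact: uniq_hyp.
  rewrite cat_uniq !map_inj_uniq ?uniq_hyp //=; try by apply: rcons_injl.
  rewrite andbT; apply/hasPn => w /mapP [x _ ->]; by rewrite mem_rcons_map.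
case/lastP => [|u d]; first by rewrite mem_cat mem_hyp !nil_notin_map.
rewrite mem_cat mem_hyp is_hyp_rcons !mem_rcons_map !mem_hyp /is_hyp.
case: d => [|[|[|d]]]; case: u => [|x u] /=; rewrite ?andbF ?andbT ?eqD //= ?andbF ?orbF //.
Qed.

Definition A2 (s t : seq (seq nat)) := \sum_(u <- s) count (Defs.arc u) t.

Lemma A2E s t : count (fun p : seq nat * seq nat => Defs.arc p.1 p.2)
   [seq (u, w) | u <- s, w <- t] = A2 s t.
Proof.
rewrite /A2; elim: s => [|x s IH]; first by rewrite big_nil.
by rewrite allpairs_cons count_cat count_map IH big_cons.
Qed.

Lemma num_arcsE n : num_arcs n = A2 (hyp_list n) (hyp_list n).
Proof. exact: A2E. Qed.

Lemma A2_perm s s' t t' : perm_eq s s' -> perm_eq t t' -> A2 s t = A2 s' t'.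
Proof.
move=> Hs Ht; rewrite /A2 (perm_big _ Hs); apply: eq_bigr => u _.
exact: (permP Ht).
Qed.

Lemma sum_count (T : Type) (p : pred T) (s : seq T) : \sum_(x <- s) (p x : nat) = count p s.
Proof. by elim: s => [|x s IH]; rewrite ?big_nil ?big_cons //= IH. Qed.

Lemma succlast_hyp m w : is_hyp m w -> last 0 w <= 1 -> is_hyp m.+1 (succlast w).
Proof.
case/lastP: w => [|x a].
  by rewrite /is_hyp /= => /eqP <-.
rewrite succlast_rcons !is_hyp_rcons last_rcons => /and4P [H1 H2 H3 /eqP H4] Ha.
apply/and4P; split => //.
  by case: x H3 {H1 H4}.
by rewrite addnS H4.
Qed.

Definition cnt n := count (fun w => last 0 w <= 1) (hyp_list n).

Lemma b0 : b 0 = 1. Proof. by []. Qed.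
Lemma a0 : num_arcs 0 = 0. Proof. by []. Qed.
Lemma c0 : cnt 0 = 1. Proof. by []. Qed.

Lemma bO m : b m.*2.+1 = b m.
Proof. by rewrite /b (perm_size (hyp_odd m)) size_map. Qed.

Lemma bE m : b m.*2.+2 = b m.+1 + b m.
Proof. by rewrite /b (perm_size (hyp_even m)) size_cat !size_map. Qed.

Lemma cO m : cnt m.*2.+1 = b m.
Proof.
rewrite /cnt (permP (hyp_odd m)) count_map /b -count_predT.
by apply: eq_count => x /=; rewrite last_rcons.
Qed.

Lemma cE m : cnt m.*2.+2 = b m.+1.
Proof.
rewrite /cnt (permP (hyp_even m)) count_cat !count_map /b -count_predT.
rewrite [X in _ + X](_ : _ = 0) ?addn0.
  by apply: eq_count => x /=; rewrite last_rcons.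
transitivity (count pred0 (hyp_list m)); last exact: count_pred0.
by apply: eq_count => x /=; rewrite last_rcons.
Qed.

Lemma aO m : num_arcs m.*2.+1 = num_arcs m.
Proof.
rewrite !num_arcsE (@A2_perm _ _ _ _ (hyp_odd m) (hyp_odd m)) /A2 big_map.
apply: eq_bigr => u _; rewrite count_map.
by apply: eq_count => w /=; rewrite arc_rcons /= orbF.
Qed.

Lemma aE m : num_arcs m.*2.+2 = num_arcs m.+1 + num_arcs m + cnt m.
Proof.
rewrite !num_arcsE (@A2_perm _ _ _ _ (hyp_even m) (hyp_even m)) /A2 big_cat /= !big_map.
under eq_bigr => u _ do rewrite count_cat !count_map.
under [X in _ + X = _]eq_bigr => u _ do rewrite count_cat !count_map.
rewrite !big_split /=.
have -> : \sum_(j <- hyp_list m.+1) count (preim (rcons^~ 0) (Defs.arc (rcons j 0))) (hyp_list m.+1)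
   = \sum_(u <- hyp_list m.+1) count (Defs.arc u) (hyp_list m.+1).
  apply: eq_bigr => u _; apply: eq_count => w /=; by rewrite arc_rcons /= orbF.
have -> : \sum_(j <- hyp_list m.+1) count (preim (rcons^~ 2) (Defs.arc (rcons j 0))) (hyp_list m)
   = 0.
  rewrite big1_seq // => u _; transitivity (count pred0 (hyp_list m)); last exact: count_pred0.
  apply: eq_count => w /=; by rewrite arc_rcons.
have -> : \sum_(j <- hyp_list m) count (preim (rcons^~ 2) (Defs.arc (rcons j 2))) (hyp_list m)
   = \sum_(u <- hyp_list m) count (Defs.arc u) (hyp_list m).
  apply: eq_bigr => u _; apply: eq_count => w /=; by rewrite arc_rcons /= orbF.
have -> : \sum_(j <- hyp_list m) count (preim (rcons^~ 0) (Defs.arc (rcons j 2))) (hyp_list m.+1)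
   = cnt m.
  rewrite /cnt -sum_count; apply: eq_big_seq => w; rewrite mem_hyp => Hw.
  rewrite (eq_count (a2 := fun u => (last 0 w <= 1) && (u == succlast w))); last first.
    by move=> u /=; rewrite arc_rcons /= eq_sym.
  case Hl: (last 0 w <= 1) => /=.
    rewrite (count_uniq_mem _ (uniq_hyp _)) mem_hyp succlast_hyp //.
  by transitivity (count pred0 (hyp_list m.+1)); last exact: count_pred0.
lia.
Qed.

Lemma ncases n : n = 0 \/ (exists m, n = m.*2.+1) \/ (exists m, n = m.*2.+2).
Proof.
case: n => [|n]; [by left | right].
have := odd_double_half n.+1.
case: (odd n.+1) => /= H.
  by left; exists (n.+1)./2; lia.
by right; exists ((n.+1)./2).-1; lia.
Qed.

Lemma b_pos n : 0 < b n.
Proof.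
elim/ltn_ind: n => n IH.
case: (ncases n) IH => [->|[[m ->]|[m ->]]] IH //.
  by rewrite bO; apply: IH; lia.
rewrite bE; have := IH m.+1; have := IH m; lia.
Qed.

Lemma cnt_pos m : 0 < cnt m.
Proof.
case: (ncases m) => [->|[[j ->]|[j ->]]] //.
  by rewrite cO b_pos.
by rewrite cE b_pos.
Qed.

Lemma ab_le n : b n <= num_arcs n + 1.
Proof.
elim/ltn_ind: n => n IH.
case: (ncases n) IH => [->|[[m ->]|[m ->]]] IH //.
  by rewrite bO aO; apply: IH; lia.
rewrite bE aE; have := IH m.+1; have := IH m; have := cnt_pos m; lia.
Qed.

Lemma b_pow s : b (2 ^ s).-1 = 1.
Proof.
elim: s => [|s IH] //.
have -> : (2 ^ s.+1).-1 = ((2 ^ s).-1).*2.+1.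
  rewrite expnS; have := expn_gt0 2 s; lia.
by rewrite bO.
Qed.

Lemma b_one k : b k = 1 -> exists s, k = (2 ^ s).-1.
Proof.
elim/ltn_ind: k => k IH.
case: (ncases k) IH => [->|[[m ->]|[m ->]]] IH.
- by exists 0.
- rewrite bO => /IH [|s ->]; first lia.
  exists s.+1; rewrite expnS; have := expn_gt0 2 s; lia.
- rewrite bE; have := b_pos m; have := b_pos m.+1; lia.
Qed.

Lemma cnt_pow s : cnt (2 ^ s).-1 = 1.
Proof.
case: s => [|s] //.
have -> : (2 ^ s.+1).-1 = ((2 ^ s).-1).*2.+1.
  rewrite expnS; have := expn_gt0 2 s; lia.
by rewrite cO b_pow.
Qed.

Lemma Vpow s : num_arcs (2 ^ s).-1 + 1 = b (2 ^ s).-1.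
Proof.
elim: s => [|s IH] //.
have -> : (2 ^ s.+1).-1 = ((2 ^ s).-1).*2.+1.
  rewrite expnS; have := expn_gt0 2 s; lia.
by rewrite aO bO.
Qed.

Lemma Vp2 t : num_arcs (2 ^ t) + 1 = b (2 ^ t).
Proof.
elim: t => [|t IH] //.
have -> : 2 ^ t.+1 = ((2 ^ t).-1).*2.+2.
  rewrite expnS; have := expn_gt0 2 t; lia.
rewrite aE bE cnt_pow.
have -> : ((2 ^ t).-1).+1 = 2 ^ t by have := expn_gt0 2 t; lia.
have := Vpow t; lia.
Qed.

Lemma Vm2 t : num_arcs (2 ^ t.+1 - 2) + 1 = b (2 ^ t.+1 - 2).
Proof.
elim: t => [|t IH] //.
have -> : 2 ^ t.+2 - 2 = (2 ^ t.+1 - 2).*2.+2.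
  rewrite (expnS 2 t.+1) expnS; have := expn_gt0 2 t; lia.
have Hc : cnt (2 ^ t.+1 - 2) = 1.
  case: t {IH} => [|t] //.
  have -> : 2 ^ t.+2 - 2 = (2 ^ t.+1 - 2).*2.+2.
    rewrite (expnS 2 t.+1) expnS; have := expn_gt0 2 t; lia.
  rewrite cE.
  have -> : (2 ^ t.+1 - 2).+1 = (2 ^ t.+1).-1.
    rewrite expnS; have := expn_gt0 2 t; lia.
  exact: b_pow.
rewrite aE bE Hc.
have -> : (2 ^ t.+1 - 2).+1 = (2 ^ t.+1).-1.
  rewrite expnS; have := expn_gt0 2 t; lia.
have := Vpow t.+1; lia.
Qed.

Lemma vE n : v n = 0%R <-> num_arcs n + 1 = b n.
Proof. rewrite /v; split => H; lia. Qed.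

Theorem mainTheorem2 (n : nat) :
  ~~ odd n ->
  (v n = 0%R <-> exists t : nat, 0 < t /\ (n = 2 ^ t - 2 \/ n = 2 ^ t)).
Proof.
move=> Hev; rewrite vE; split.
- case: (ncases n) => [->|[[m Hm]|[m ->]]].
  + by move=> _; exists 1; split => //; left.
  + by rewrite Hm /= odd_double in Hev.
  + rewrite aE bE => H.
    have := ab_le m.+1; have := ab_le m; have := cnt_pos m => h1 h2 h3.
    have Hc : cnt m = 1 by lia.
    case: (ncases m) Hc => [->|[[j ->]|[j ->]]] Hc.
    * by exists 1; split => //; right.
    * rewrite cO in Hc; case: (@b_one _ Hc) => s ->.
      exists s.+2; split => //; right; rewrite !expnS; have := expn_gt0 2 s; lia.
    * rewrite cE in Hc; case: (@b_one _ Hc) => s Hs.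
      exists s.+2; split => //; left; rewrite !expnS; have := expn_gt0 2 s; lia.
- case=> t [Ht [->|->]].
  + case: t Ht => [|t] // _; exact: Vm2.
  + exact: Vp2.
Qed.
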